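(* Let $E$ be a finite graph and let $R$ be a unital commutative ring of characteristic $0$. If $\alpha_1,\dots,\alpha_n\in E^*$ satisfy $\sum_{i=1}^n\alpha_i\alpha_i^*=1$ in $L_R(E)$, then $\alpha_i^*\alpha_j=0$ for all $i\ne j$.
   Context: A graph $E=(E^0,E^1,r,s)$ has vertices $E^0$, edges $E^1$, and range and source maps $r,s$; finite means $E^0,E^1$ finite. A path is a word $e_1\cdots e_n$ with $r(e_i)=s(e_{i+1})$; vertices are paths of length $0$; $E^*$ is the set of finite paths. The Leavitt path algebra $L_R(E)$ is the universal $R$-algebra generated by pairwise orthogonal idempotents $\{v\}_{v\in E^0}$ and $\{e,e^*\}_{e\in E^1}$ with: $e^*f=0$ for $e\ne f$; $e^*e=r(e)$; $s(e)e=e=er(e)$; $e^*s(e)=e^*=r(e)e^*$; and $v=\sum_{e\in s^{-1}(v)}ee^*$ whenever $s^{-1}(v)$ is finite and nonempty. For $\alpha=e_1\cdots e_n$, $\alpha$ denotes the product $e_1\cdots e_n$ and $\alpha^*=e_n^*\cdots e_1^*$. For finite $E$, $L_R(E)$ is unital with $1=\sum_{v\in E^0}v$. *)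

(* Defs.v *)
From HB Require Import structures.
From mathcomp Require Import all_boot all_order all_algebra.
Set Implicit Arguments. Unset Strict Implicit. Unset Printing Implicit Defensive.
Import GRing.Theory.
Local Open Scope ring_scope.

(* Leavitt path algebra L_R(E) of a graph E = (E0, E1, r, s), constructed as
   the universal (non-unital, associative) R-algebra presented by generators
   and relations: formal terms modulo the smallest congruence containing the
   R-algebra axioms and the Leavitt path algebra relations. *)

Section LPA.
Variables (R : Type) (E0 E1 : Type).

Inductive lterm : Type :=
  | tZero : lterm
  | tV : E0 -> lterm
  | tE : E1 -> lterm
  | tG : E1 -> lterm
  | tAdd : lterm -> lterm -> lterm
  | tOpp : lterm -> lterm
  | tMul : lterm -> lterm -> lterm
  | tScale : R -> lterm -> lterm.

Definition tsum (l : seq lterm) : lterm := foldr tAdd tZero l.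

Inductive lpath : Type :=
  | PV : E0 -> lpath
  | PE : E1 -> seq E1 -> lpath.

Definition path_term (p : lpath) : lterm :=
  match p with
  | PV v => tV v
  | PE e es => foldl (fun t f => tMul t (tE f)) (tE e) es
  end.

Definition path_ghost (p : lpath) : lterm :=
  match p with
  | PV v => tV v
  | PE e es => foldl (fun t f => tMul (tG f) t) (tG e) es
  end.
End LPA.

Arguments tZero {R E0 E1}.
Arguments tV {R E0 E1}.
Arguments tE {R E0 E1}.
Arguments tG {R E0 E1}.
Arguments tAdd {R E0 E1}.
Arguments tOpp {R E0 E1}.
Arguments tMul {R E0 E1}.
Arguments tScale {R E0 E1}.
Arguments PV {E0 E1}.
Arguments PE {E0 E1}.

Section LPARel.
Variables (R : comNzRingType) (E0 E1 : finType) (r s : E1 -> E0).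

Definition is_lpath (p : lpath E0 E1) : bool :=
  match p with
  | PV _ => true
  | PE e es => path (fun a b => r a == s b) e es
  end.

Notation T := (lterm R E0 E1).

Inductive lpa_eq : T -> T -> Prop :=
  | le_refl x : lpa_eq x x
  | le_sym x y : lpa_eq x y -> lpa_eq y x
  | le_trans x y z : lpa_eq x y -> lpa_eq y z -> lpa_eq x z
  | le_add x x' y y' : lpa_eq x x' -> lpa_eq y y' -> lpa_eq (tAdd x y) (tAdd x' y')
  | le_opp x x' : lpa_eq x x' -> lpa_eq (tOpp x) (tOpp x')
  | le_mul x x' y y' : lpa_eq x x' -> lpa_eq y y' -> lpa_eq (tMul x y) (tMul x' y')
  | le_scale a x x' : lpa_eq x x' -> lpa_eq (tScale a x) (tScale a x')
  | le_addA x y z : lpa_eq (tAdd x (tAdd y z)) (tAdd (tAdd x y) z)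
  | le_addC x y : lpa_eq (tAdd x y) (tAdd y x)
  | le_add0 x : lpa_eq (tAdd tZero x) x
  | le_addN x : lpa_eq (tAdd x (tOpp x)) tZero
  | le_scaleDr a x y : lpa_eq (tScale a (tAdd x y)) (tAdd (tScale a x) (tScale a y))
  | le_scaleDl a b x : lpa_eq (tScale (a + b) x) (tAdd (tScale a x) (tScale b x))
  | le_scaleM a b x : lpa_eq (tScale (a * b) x) (tScale a (tScale b x))
  | le_scale1 x : lpa_eq (tScale 1 x) x
  | le_mulA x y z : lpa_eq (tMul x (tMul y z)) (tMul (tMul x y) z)
  | le_mulDl x y z : lpa_eq (tMul (tAdd x y) z) (tAdd (tMul x z) (tMul y z))
  | le_mulDr x y z : lpa_eq (tMul x (tAdd y z)) (tAdd (tMul x y) (tMul x z))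
  | le_scalel a x y : lpa_eq (tMul (tScale a x) y) (tScale a (tMul x y))
  | le_scaler a x y : lpa_eq (tMul x (tScale a y)) (tScale a (tMul x y))
  | le_vv v w : lpa_eq (tMul (tV v) (tV w)) (if v == w then tV v else tZero)
  | le_ghost_edge e f :
      lpa_eq (tMul (tG e) (tE f)) (if e == f then tV (r e) else tZero)
  | le_s_edge e : lpa_eq (tMul (tV (s e)) (tE e)) (tE e)
  | le_edge_r e : lpa_eq (tMul (tE e) (tV (r e))) (tE e)
  | le_ghost_s e : lpa_eq (tMul (tG e) (tV (s e))) (tG e)
  | le_r_ghost e : lpa_eq (tMul (tV (r e)) (tG e)) (tG e)
  | le_CK2 v : (0 < #|[pred e | s e == v]|)%N ->
      lpa_eq (tV v) (tsum [seq tMul (tE e) (tG e) | e <- enum [pred e | s e == v]]).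

Definition lpa_one : T := tsum [seq tV v | v <- enum E0].
End LPARel.

(* Main.v *)
Require Import Defs.
From mathcomp Require Import all_boot all_order all_algebra.
From Stdlib Require Import ClassicalEpsilon FunctionalExtensionality.
Import GRing.Theory.
Local Open Scope ring_scope.

Section Model.
Context {R : comNzRingType} {E0 E1 : finType} (r s : E1 -> E0).

Definition X := (E0 * (nat -> option E1))%type.
Definition sink (v : E0) := forall e, s e <> v.
Definition valid (x : X) : Prop :=
  [/\ (x.2 0%N = None -> sink x.1),
      (forall e, x.2 0%N = Some e -> s e = x.1),
      (forall k e, x.2 k = Some e ->
         match x.2 k.+1 with Some f => s f = r e | None => sink (r e) end) &
      (forall k, x.2 k = None -> x.2 k.+1 = None)].

Definition ind (P : Prop) (a : R) : R :=
  if excluded_middle_informative P then a else 0.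

Definition tl (e : E1) (x : X) : X := (r e, fun k => x.2 k.+1).
Definition cns (e : E1) (x : X) : X :=
  (s e, fun k => if k is k'.+1 then x.2 k' else Some e).

Definition Vop v (F : X -> R) x := ind (valid x /\ x.1 = v) (F x).
Definition Eop e (F : X -> R) x := ind (valid x /\ x.2 0%N = Some e) (F (tl e x)).
Definition Gop e (F : X -> R) x := ind (valid x /\ x.1 = r e) (F (cns e x)).

Fixpoint interp (t : lterm R E0 E1) : (X -> R) -> X -> R :=
  match t with
  | tZero => fun _ _ => 0
  | tV v => Vop v
  | tE e => Eop e
  | tG e => Gop e
  | tAdd a b => fun F x => interp a F x + interp b F x
  | tOpp a => fun F x => - interp a F x
  | tMul a b => fun F => interp a (interp b F)
  | tScale c a => fun F x => c * interp a F x
  end.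

Tactic Notation "em" simple_intropattern(p) :=
  match goal with |- context [excluded_middle_informative ?P] =>
    destruct (excluded_middle_informative P) as p end.

Ltac case_ind := rewrite ?/Vop ?/Eop ?/Gop /ind;
  repeat match goal with |- context [excluded_middle_informative ?P] =>
    destruct (excluded_middle_informative P) end.

Lemma interp_add t F G x :
  interp t (fun y => F y + G y) x = interp t F x + interp t G x.
Proof.
elim: t F G x => [|v|e|e|a IHa b IHb|a IHa|a IHa b IHb|c a IHa] F G x /=.
- by rewrite addr0.
- by case_ind; rewrite ?addr0.
- by case_ind; rewrite ?addr0.
- by case_ind; rewrite ?addr0.
- by rewrite IHa IHb addrACA.
- by rewrite IHa opprD.
- have -> : interp b (fun y => F y + G y) = fun y => interp b F y + interp b G y.
    by apply: functional_extensionality => y; rewrite IHb.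
  by rewrite IHa.
- by rewrite IHa mulrDr.
Qed.

Lemma interp_scale t c F x :
  interp t (fun y => c * F y) x = c * interp t F x.
Proof.
elim: t c F x => [|v|e|e|a IHa b IHb|a IHa|a IHa b IHb|d a IHa] c F x /=.
- by rewrite mulr0.
- by case_ind; rewrite ?mulr0.
- by case_ind; rewrite ?mulr0.
- by case_ind; rewrite ?mulr0.
- by rewrite IHa IHb mulrDr.
- by rewrite IHa mulrN.
- have -> : interp b (fun y => c * F y) = fun y => c * interp b F y.
    by apply: functional_extensionality => y; rewrite IHb.
  by rewrite IHa.
- by rewrite IHa mulrCA.
Qed.

Lemma valid_tl e x : valid x -> x.2 0%N = Some e -> valid (tl e x).
Proof.
case=> h1 h2 h3 h4 he; split => /=.
- by move=> H; have := h3 0%N e he; rewrite H.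
- by move=> f H; have := h3 0%N e he; rewrite H.
- by move=> k f H; apply: h3 H.
- by move=> k H; apply: h4.
Qed.

Lemma valid_cns e y : valid y -> y.1 = r e -> valid (cns e y).
Proof.
case=> h1 h2 h3 h4 hy; split => /=.
- by [].
- by move=> f [->].
- case=> [|k] f /=.
  + move=> [<-]; case E: (y.2 0%N) => [g|].
    * by rewrite (h2 _ E) hy.
    * by rewrite -hy; apply: h1.
  + by apply: h3.
- by case=> [|k] //=; apply: h4.
Qed.

Lemma src_edge {e x} : valid x -> x.2 0%N = Some e -> x.1 = s e.
Proof. by case=> _ h2 _ _ H; rewrite (h2 _ H). Qed.

Lemma cns_tl e x : valid x -> x.2 0%N = Some e -> cns e (tl e x) = x.
Proof.
move=> hv he; have hs := src_edge hv he.
case: x hv he hs => v p /= _ he ->; congr pair.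
by apply: functional_extensionality; case.
Qed.

Lemma tl_cns e y : y.1 = r e -> tl e (cns e y) = y.
Proof. by case: y => v p /= ->. Qed.

Lemma interp_tsum l F x : interp (tsum l) F x = \sum_(t <- l) interp t F x.
Proof. elim: l => [|t l IH] /=; by rewrite ?big_nil ?big_cons ?IH. Qed.

Lemma EG e F x : Eop e (Gop e F) x = ind (valid x /\ x.2 0%N = Some e) (F x).
Proof.
rewrite /Eop /Gop /ind.
em [[hv he]|hn] => //.
em [hq|hn]; first by rewrite cns_tl.
by exfalso; apply: hn; split; [apply: valid_tl|].
Qed.

Ltac ext2 := apply: functional_extensionality => F; apply: functional_extensionality => x0.

Lemma sound a b : lpa_eq r s a b -> interp a = interp b.
Proof.
elim=> {a b}.
- by [].
- by move=> x y _ H.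
- by move=> x y z _ H1 _ H2; rewrite H1 H2.
- by move=> x x' y y' _ H1 _ H2 /=; rewrite H1 H2.
- by move=> x x' _ H /=; rewrite H.
- by move=> x x' y y' _ H1 _ H2 /=; rewrite H1 H2.
- by move=> c x x' _ H /=; rewrite H.
- by move=> x y z; ext2; rewrite /= addrA.
- by move=> x y; ext2; rewrite /= addrC.
- by move=> x; ext2; rewrite /= add0r.
- by move=> x; ext2; rewrite /= addrN.
- by move=> c x y; ext2; rewrite /= mulrDr.
- by move=> c d x; ext2; rewrite /= mulrDl.
- by move=> c d x; ext2; rewrite /= mulrA.
- by move=> x; ext2; rewrite /= mul1r.
- by [].
- by [].
- by move=> x y z; ext2; rewrite /= interp_add.
- by [].
- by move=> c x y; ext2; rewrite /= interp_scale.
- move=> v w; ext2; case: eqP => [<-|ne] /=; case_ind => //; exfalso.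
  by case: a => _ Ha; case: a0 => _ Hb; apply: ne; rewrite -Ha -Hb.
- move=> e f; ext2; case: eqP => [<-|ne] /=; rewrite /Gop /Eop /Vop /ind /=.
  + em [[hv hr]|hn].
      em [hq|hn]; first by rewrite tl_cns.
      by exfalso; apply: hn; split => //; apply: valid_cns.
    by em [[]|] => //.
  + em [hq|] => //.
    em [[hq2 E]|] => //; exfalso; apply: ne; by case: E.
- move=> e; ext2; rewrite /= /Vop /Eop /ind.
  em [[hv he]|hn];
   em [[hv' he']|hn'] => //.
  by exfalso; apply: hn; split => //; rewrite (src_edge hv' he').
- move=> e; ext2; rewrite /= /Vop /Eop /ind.
  em [[hv he]|hn] => //.
  em [|hn] => //.
  by exfalso; apply: hn; split => //; apply: valid_tl.
- move=> e; ext2; rewrite /= /Vop /Gop /ind.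
  em [[hv he]|hn] => //.
  em [|hn] => //.
  by exfalso; apply: hn; split => //; apply: valid_cns.
- move=> e; ext2; rewrite /= /Vop /Gop /ind.
  by em [[hv he]|hn].
- move=> v Hv; ext2; rewrite interp_tsum big_map big_enum /=.
  under eq_bigr => e _ do rewrite EG.
  rewrite /Vop /ind; em [[hv hx]|hn].
  + case E: (x0.2 0%N) => [e0|].
    * have he0 : e0 \in [pred e | s e == v] by rewrite inE -hx (src_edge hv E).
      rewrite (bigD1 e0) //= big1 ?addr0.
        by em [hq|hn] => //; exfalso; apply: hn.
      move=> e /andP [_ ne]; em [[hq ee]|] => //.
      by exfalso; case: ee => ee; rewrite ee eqxx in ne.
    * exfalso; case: hv => h1 _ _ _; have := h1 E; rewrite hx.
      move: Hv => /card_gt0P [e]; rewrite inE => /eqP he.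
      by move=> /(_ e).
  + rewrite big1 // => e; rewrite inE => /eqP he.
    em [[hv hE]|] => //.
    by exfalso; apply: hn; split => //; rewrite (src_edge hv hE).
Qed.

Notation T := (lterm R E0 E1).
Notation EQ := (@lpa_eq R E0 E1 r s).


Lemma Erefl x : EQ x x. Proof. exact: le_refl. Qed.
Lemma Esym {x y} : EQ x y -> EQ y x. Proof. exact: le_sym. Qed.
Lemma Etrans {x y z} : EQ x y -> EQ y z -> EQ x z. Proof. exact: le_trans. Qed.
Lemma Eadd {x x' y y'} : EQ x x' -> EQ y y' -> EQ (tAdd x y) (tAdd x' y'). Proof. exact: le_add. Qed.
Lemma Emul {x x' y y'} : EQ x x' -> EQ y y' -> EQ (tMul x y) (tMul x' y'). Proof. exact: le_mul. Qed.
Lemma EaddA x y z : EQ (tAdd x (tAdd y z)) (tAdd (tAdd x y) z). Proof. exact: le_addA. Qed.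
Lemma EaddC x y : EQ (tAdd x y) (tAdd y x). Proof. exact: le_addC. Qed.
Lemma Eadd0 x : EQ (tAdd tZero x) x. Proof. exact: le_add0. Qed.
Lemma EaddN x : EQ (tAdd x (tOpp x)) tZero. Proof. exact: le_addN. Qed.
Lemma EmulA x y z : EQ (tMul x (tMul y z)) (tMul (tMul x y) z). Proof. exact: le_mulA. Qed.
Lemma EmulDl x y z : EQ (tMul (tAdd x y) z) (tAdd (tMul x z) (tMul y z)). Proof. exact: le_mulDl. Qed.
Lemma EmulDr x y z : EQ (tMul x (tAdd y z)) (tAdd (tMul x y) (tMul x z)). Proof. exact: le_mulDr. Qed.
Lemma Evv v w : EQ (tMul (tV v) (tV w)) (if v == w then tV v else tZero). Proof. exact: le_vv. Qed.
Lemma Ege e f : EQ (tMul (tG e) (tE f)) (if e == f then tV (r e) else tZero). Proof. exact: le_ghost_edge. Qed.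
Lemma Ese e : EQ (tMul (tV (s e)) (tE e)) (tE e). Proof. exact: le_s_edge. Qed.
Lemma Egs e : EQ (tMul (tG e) (tV (s e))) (tG e). Proof. exact: le_ghost_s. Qed.

Definition step (t : T) (f : E1) : T := tMul t (tE f).
Definition gstep (t : T) (f : E1) : T := tMul (tG f) t.

Lemma eq_addr0 x : EQ (tAdd x tZero) x.
Proof. exact: Etrans (EaddC _ _) (Eadd0 _). Qed.

Lemma eq_cancel z : EQ z (tAdd z z) -> EQ z tZero.
Proof.
move=> h1.
apply: Esym; apply: Etrans (Esym (EaddN z)) _.
apply: Etrans (Eadd h1 (Erefl _)) _.
apply: Etrans (Esym (EaddA _ _ _)) _.
apply: Etrans (Eadd (Erefl _) (EaddN _)) _.
exact: eq_addr0.
Qed.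

Lemma eq_mul0l y : EQ (tMul tZero y) tZero.
Proof.
apply: eq_cancel.
apply: Etrans (EmulDl tZero tZero y).
apply: Emul; last exact: Erefl.
exact: Esym (Eadd0 _).
Qed.

Lemma eq_mul0r y : EQ (tMul y tZero) tZero.
Proof.
apply: eq_cancel.
apply: Etrans (EmulDr y tZero tZero).
apply: Emul; first exact: Erefl.
exact: Esym (Eadd0 _).
Qed.

Lemma eq_mulz_l a y : EQ a tZero -> EQ (tMul a y) tZero.
Proof. by move=> h; apply: Etrans (Emul h (Erefl _)) (eq_mul0l _). Qed.
Lemma eq_mulz_r a y : EQ a tZero -> EQ (tMul y a) tZero.
Proof. by move=> h; apply: Etrans (Emul (Erefl _) h) (eq_mul0r _). Qed.

Lemma step_congr t t' fs : EQ t t' -> EQ (foldl step t fs) (foldl step t' fs).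
Proof.
elim: fs t t' => [|f fs IH] t t' h //=.
by apply: IH; apply: Emul => //; apply: Erefl.
Qed.
Lemma gstep_congr t t' fs : EQ t t' -> EQ (foldl gstep t fs) (foldl gstep t' fs).
Proof.
elim: fs t t' => [|f fs IH] t t' h //=.
by apply: IH; apply: Emul => //; apply: Erefl.
Qed.
Lemma step_zero t fs : EQ t tZero -> EQ (foldl step t fs) tZero.
Proof.
elim: fs t => [|f fs IH] t h //=; apply: IH; exact: eq_mulz_l.
Qed.
Lemma gstep_zero t fs : EQ t tZero -> EQ (foldl gstep t fs) tZero.
Proof.
elim: fs t => [|f fs IH] t h //=; apply: IH; exact: eq_mulz_r.
Qed.

Lemma assocB a t fs : EQ (tMul a (foldl step t fs)) (foldl step (tMul a t) fs).
Proof.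
elim: fs t => [|f fs IH] t /=; first exact: Erefl.
apply: Etrans (IH _) _; apply: step_congr; exact: EmulA.
Qed.
Lemma assocA t b es : EQ (tMul (foldl gstep t es) b) (foldl gstep (tMul t b) es).
Proof.
elim: es t => [|e es IH] t /=; first exact: Erefl.
apply: Etrans (IH _) _; apply: gstep_congr; exact: Esym (EmulA _ _ _).
Qed.

Lemma red es : forall e f fs, path (fun a b => r a == s b) f fs ->
  EQ (foldl gstep (foldl step (tMul (tG e) (tE f)) fs) es) tZero \/
  (prefix (e :: es) (f :: fs) \/ prefix (f :: fs) (e :: es)).
Proof.
elim: es => [|e2 es IH] e f fs hp.
- case: (eqVneq e f) => [<-|ne].
    by right; left; rewrite /= eqxx; case: fs {hp}.
  left; apply: gstep_zero; apply: step_zero.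
  by apply: Etrans (Ege _ _) _; rewrite (negbTE ne); apply: Erefl.
- case: (eqVneq e f) hp => [<-|ne] hp; last first.
    left; apply: gstep_zero; apply: step_zero.
    by apply: Etrans (Ege _ _) _; rewrite (negbTE ne); apply: Erefl.
  case: fs hp => [|f2 fs] hp.
    by right; right; rewrite /= eqxx; case: (e2 :: es).
  move: hp => /= /andP [/eqP hrs hp].
  have hstep : EQ (foldl gstep (foldl step (tMul (tG e) (tE e)) (f2 :: fs)) (e2 :: es))
                  (foldl gstep (foldl step (tMul (tG e2) (tE f2)) fs) es).
    rewrite /=; apply: gstep_congr.
    apply: Etrans _ (assocB _ _ _); apply: Emul; first exact: Erefl.
    apply: step_congr; rewrite /step.
    apply: Etrans (Emul (Ege _ _) (Erefl _)) _.
    rewrite eqxx hrs; exact: Ese.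
  case: (IH e2 f2 fs hp) => [h|h].
    by left; apply: Etrans hstep h.
  by right; rewrite /= !eqxx.
Qed.

Fixpoint Pref (L : seq E1) (x : X) : Prop :=
  match L with
  | [::] => True
  | e :: L' => [/\ valid x, x.2 0%N = Some e & Pref L' (tl e x)]
  end.

Lemma TG L K : foldr Eop (foldl (fun K f => Gop f K) K L) L =
               fun x => ind (Pref L x) (K x).
Proof.
elim: L K => [|e L IH] K /=.
  by apply: functional_extensionality => x; rewrite /ind; em [|hn] => //; case: hn.
rewrite IH; apply: functional_extensionality => x.
rewrite /Eop /Gop /ind.
em [[hv he]|hn].
- em [hp|hp].
  + em [[hv2 ht]|hn].
    * em [hh|hn]; first by rewrite cns_tl.
      by exfalso; apply: hn.
    * by exfalso; apply: hn; split => //; apply: valid_tl.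
  + by em [[h1 h2 hp']|] => //.
- by em [[hv' he' h3]|] => //; exfalso; apply: hn.
Qed.

Lemma term_fold t0 es H : interp (foldl step t0 es) H = interp t0 (foldr Eop H es).
Proof. by elim: es t0 => [|f es IH] t0 //=; rewrite IH. Qed.

Lemma ghost_fold t0 es G :
  interp (foldl gstep t0 es) G = foldl (fun K f => Gop f K) (interp t0 G) es.
Proof. by elim: es t0 => [|f es IH] t0 //=; rewrite IH. Qed.

Definition Q (a : lpath E0 E1) (x : X) : Prop :=
  match a with
  | PV v => valid x /\ x.1 = v
  | PE e es => Pref (e :: es) x
  end.

Lemma QE a G x :
  interp (tMul (path_term R a) (path_ghost R a)) G x = ind (Q a x) (G x).
Proof.
case: a => [v|e es].
  by rewrite /= /Vop /ind; try em [h|h].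
change (interp (foldl step (tE e) es) (interp (foldl gstep (tG e) es) G) x =
        ind (Pref (e :: es) x) (G x)).
rewrite term_fold ghost_fold.
change (foldr Eop (foldl (fun K f => Gop f K) G (e :: es)) (e :: es) x =
        ind (Pref (e :: es) x) (G x)).
by rewrite TG.
Qed.

Definition nxt (w : E0) : option E1 := [pick e | s e == w].
Fixpoint vs (w : E0) (k : nat) : E0 :=
  if k is k'.+1 then
    (match nxt (vs w k') with Some e => r e | None => vs w k' end)
  else w.
Definition walk (w : E0) : X := (w, fun k => nxt (vs w k)).

Lemma nxt_none w : nxt w = None -> sink w.
Proof. by rewrite /nxt; case: pickP => // h _ e he; have := h e; rewrite he eqxx. Qed.
Lemma nxt_some w e : nxt w = Some e -> s e = w.
Proof. by rewrite /nxt; case: pickP => // f /eqP hf [<-]. Qed.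

Lemma valid_walk w : valid (walk w).
Proof.
split => /=.
- exact: nxt_none.
- exact: nxt_some.
- move=> k e he /=; rewrite he.
  case E: (nxt (r e)) => [f|]; [exact: nxt_some | exact: nxt_none].
- by move=> k he /=; rewrite he.
Qed.

Fixpoint ext (f : E1) (fs : seq E1) : X :=
  match fs with
  | [::] => cns f (walk (r f))
  | g :: gs => cns f (ext g gs)
  end.

Lemma ext1 f fs : (ext f fs).1 = s f.
Proof. by case: fs. Qed.

Lemma ext_ok f fs : path (fun a b => r a == s b) f fs -> Pref (f :: fs) (ext f fs).
Proof.
elim: fs f => [|g gs IH] f /=.
  move=> _; split => //; exact: valid_cns (valid_walk _) _.
move=> /andP [/eqP hrs hp]; have := IH g hp => hP.
have hv : valid (ext g gs) by case: gs {IH hp} hP => [|? ?] [].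
have h1 : (ext g gs).1 = r f by rewrite ext1 hrs.
by split => //; [exact: valid_cns | rewrite tl_cns].
Qed.

Lemma Pref_prefix {L M x} : prefix L M -> Pref M x -> Pref L x.
Proof.
elim: L M x => [|a L IH] [|b M] x //= /andP [/eqP -> hp] [hv he hM].
by split => //; apply: IH hM.
Qed.

Lemma Pref_valid {f fs x} : Pref (f :: fs) x -> valid x.
Proof. by case. Qed.

Definition nb (P : Prop) : nat := if excluded_middle_informative P then 1%N else 0%N.
Lemma ind1 P : ind P 1 = (nb P)%:R :> R.
Proof. by rewrite /ind /nb; em [h|h]. Qed.

Lemma main_aux
    (charR0 : forall m : nat, (0 < m)%N -> m%:R != 0 :> R)
    (n : nat) (alpha : 'I_n -> lpath E0 E1)
    (Halpha : forall i, is_lpath r s (alpha i))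
    (Hsum : lpa_eq r s
              (tsum [seq tMul (path_term R (alpha i)) (path_ghost R (alpha i))
                    | i <- enum 'I_n])
              (lpa_one R E0 E1)) :
  forall i j : 'I_n, i != j ->
    lpa_eq r s (tMul (path_ghost R (alpha i)) (path_term R (alpha j))) tZero.
Proof.
have count : forall x, valid x -> forall i j, i != j ->
    Q (alpha i) x -> Q (alpha j) x -> False.
  move=> x hv i j ij hi hj.
  have := congr1 (fun f => f (fun _ => 1) x) (sound _ _ Hsum).
  move=> H0; cbv beta in H0; move: H0.
  rewrite /lpa_one !interp_tsum !big_map.
  have hone : \sum_(v <- Finite.enum E0) interp (tV v) (fun _ : X => 1) x = 1 :> R.
    rewrite -enumT big_enum (bigD1 x.1) //= big1.
      by rewrite addr0 /Vop /ind; em [h|h] => //; case: h.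
    move=> v hv1; rewrite /Vop /ind; em [[h0 hx]|h] => //.
    by rewrite hx eqxx in hv1.
  rewrite hone.
  under eq_bigr => k _ do rewrite QE ind1.
  rewrite -natr_sum -enumT big_enum /= (bigD1 i) //= (bigD1 j) /=; last by rewrite eq_sym.
  have -> : nb (Q (alpha i) x) = 1%N by rewrite /nb; em [h|h].
  have -> : nb (Q (alpha j) x) = 1%N by rewrite /nb; em [h|h].
  set m := (\sum_(_ | _) _)%N.
  rewrite natrD => H.
  have H2 : (1 + m)%:R = 0 :> R.
    by have := congr1 (fun y => - 1 + y) H; rewrite /= addKr addNr.
  by move: (charR0 _ (ltn0Sn m)); rewrite H2 eqxx.
move=> i j ij.
have Hi := Halpha i; have Hj := Halpha j.
case Ea: (alpha i) Hi => [v|e es] Hi; case Eb: (alpha j) Hj => [w|f fs] Hj /=.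
- case: (eqVneq v w) Eb => [<-|ne] Eb.
    exfalso; apply: (count (walk v) (valid_walk v) i j ij); rewrite ?Ea ?Eb /=;
      by split => //; exact: valid_walk.
  by apply: Etrans (Evv _ _) _; rewrite (negbTE ne); apply: Erefl.
- case: (eqVneq v (s f)) => [ev|ne].
    have hP := ext_ok _ _ Hj; exfalso.
    apply: (count (ext f fs) (Pref_valid hP) i j ij); rewrite ?Ea ?Eb //=.
    by split; [exact: Pref_valid hP | rewrite ext1 ev].
  change (EQ (tMul (tV v) (foldl step (tE f) fs)) tZero).
  apply: Etrans (assocB _ _ _) _; apply: step_zero.
  apply: Etrans (Emul (Erefl _) (Esym (Ese f))) _.
  apply: Etrans (EmulA _ _ _) _; apply: eq_mulz_l.
  by apply: Etrans (Evv _ _) _; rewrite (negbTE ne); apply: Erefl.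
- case: (eqVneq w (s e)) => [ew|ne].
    have hP := ext_ok _ _ Hi; exfalso.
    apply: (count (ext e es) (Pref_valid hP) i j ij); rewrite ?Ea ?Eb //=.
    by split; [exact: Pref_valid hP | rewrite ext1 ew].
  change (EQ (tMul (foldl gstep (tG e) es) (tV w)) tZero).
  apply: Etrans (assocA _ _ _) _; apply: gstep_zero.
  apply: Etrans (Emul (Esym (Egs e)) (Erefl _)) _.
  apply: Etrans (Esym (EmulA _ _ _)) _; apply: eq_mulz_r.
  by apply: Etrans (Evv _ _) _; rewrite eq_sym (negbTE ne); apply: Erefl.
- change (EQ (tMul (foldl gstep (tG e) es) (foldl step (tE f) fs)) tZero).
  apply: Etrans (assocA _ _ _) _.
  apply: Etrans (gstep_congr _ _ es (assocB _ _ _)) _.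
  case: (red es e f fs Hj) => [//|[hp|hp]]; exfalso.
  + have hP := ext_ok _ _ Hj.
    apply: (count (ext f fs) (Pref_valid hP) i j ij); rewrite ?Ea ?Eb //=.
    exact: Pref_prefix hp hP.
  + have hP := ext_ok _ _ Hi.
    apply: (count (ext e es) (Pref_valid hP) i j ij); rewrite ?Ea ?Eb //=.
    exact: Pref_prefix hp hP.
Qed.

End Model.

Theorem lemma4p1 (R : comNzRingType)
    (charR0 : forall m : nat, (0 < m)%N -> m%:R != 0 :> R)
    (E0 E1 : finType) (r s : E1 -> E0)
    (n : nat) (alpha : 'I_n -> lpath E0 E1)
    (Halpha : forall i, is_lpath r s (alpha i))
    (Hsum : lpa_eq r s
              (tsum [seq tMul (path_term R (alpha i)) (path_ghost R (alpha i))
                    | i <- enum 'I_n])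
              (lpa_one R E0 E1)) :
  forall i j : 'I_n, i != j ->
    lpa_eq r s (tMul (path_ghost R (alpha i)) (path_term R (alpha j))) tZero.
Proof.
exact: (@main_aux R E0 E1 r s charR0 n alpha Halpha Hsum).
Qed.
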